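(* (i) Let $P(z,\bar z)=\alpha_{n,0}z^n+P_{n-1}(z,\bar z)$ be a polyanalytic polynomial with $\alpha_{n,0}\in\mathbb{C}\setminus\{0\}$, where $P_{n-1}$ is a polyanalytic polynomial with $\deg(P_{n-1})\leq n-1$. Then $P$ has at most $n^2$ zeros. (ii) Let $P(z,\bar z)=p(z)+\overline{q(z)}$, where $p,q$ are analytic polynomials with $\deg(p)=n>\deg(q)$. Then $P$ has at most $n^2$ zeros. Moreover, in both (i) and (ii), if $P$ has exactly $n^2$ zeros, then $P$ is irreducible.
   Context: A polyanalytic polynomial is a function $\mathbb{C}\to\mathbb{C}$ of the form $P(z,\bar z)=\sum_{j+k\le n}\alpha_{j,k} z^j \bar z^{k}$ with complex coefficients (a polynomial in $z$ and $\bar z$); two such polynomials are equal iff all coefficients agree. Its degree is the largest $j+k$ with $\alpha_{j,k}\neq 0$. $P$ is reducible if $P=P_1P_2$ for polyanalytic polynomials with $\deg(P_1),\deg(P_2)\geq 1$, and irreducible otherwise. A zero of $P$ is a point $z\in\mathbb{C}$ with $P(z,\bar z)=0$; zeros are counted as distinct points. *)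

(* Defs.v *)
(* polyanalytic polynomials as bivariate polynomials
   {mpoly C[2]} with 'X_0 standing for z and 'X_1 for \bar z,
   over C := R[i] (complex numbers over a realType R). *)
From HB Require Import structures.
From mathcomp Require Import all_boot all_order all_algebra.
From mathcomp Require Import mpoly.
From mathcomp Require Import complex.
From mathcomp Require Import reals.
Set Implicit Arguments. Unset Strict Implicit. Unset Printing Implicit Defensive.
Import Order.TTheory GRing.Theory Num.Theory.
Local Open Scope ring_scope.

Section Polyanalytic.
Variable R : realType.
Local Notation C := R[i].

Definition polyan := {mpoly C[2]}.

(* degree: largest j+k with alpha_{j,k} != 0; msize P = 1 + deg P (0 for P = 0) *)
Definition pdeg (P : polyan) : nat := (msize P).-1.

Definition peval (P : polyan) (z : C) : C :=
  P.@[fun i : 'I_2 => if val i == 0%N then z else z^*].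

Definition pzero (P : polyan) (z : C) : Prop := peval P z = 0.

Definition preducible (P : polyan) : Prop :=
  exists P1 P2 : polyan, [/\ (1 <= pdeg P1)%N, (1 <= pdeg P2)%N & P = P1 * P2].

Definition pirreducible (P : polyan) : Prop := ~ preducible P.

Definition at_most_zeros (P : polyan) (m : nat) : Prop :=
  forall s : seq C, uniq s -> (forall z, z \in s -> pzero P z) -> (size s <= m)%N.

Definition exactly_zeros (P : polyan) (m : nat) : Prop :=
  exists s : seq C, [/\ uniq s, size s = m & forall z, z \in s <-> pzero P z].

Definition an_of (p : {poly C}) : polyan :=
  \sum_(j < size p) p`_j *: 'X_(0 : 'I_2) ^+ j.

Definition conjan_of (q : {poly C}) : polyan :=
  \sum_(j < size q) (q`_j)^* *: 'X_(1 : 'I_2) ^+ j.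

End Polyanalytic.

(* Main.v *)
Require Import Defs.
From HB Require Import structures.
From mathcomp Require Import all_boot all_order all_algebra.
From mathcomp Require Import mpoly.
From mathcomp Require Import complex.
From mathcomp Require Import reals.
From mathcomp Require Import fingroup perm.
From mathcomp Require Import ring lra zify.
Import Order.TTheory GRing.Theory Num.Theory.
Local Open Scope ring_scope.
Set Implicit Arguments. Unset Strict Implicit. Unset Printing Implicit Defensive.

Section Main.
Variable R : realType.
Local Notation C := R[i].
Local Notation X0 := ('X_(0 : 'I_2) : polyan R).
Local Notation i0 := (0%R : 'I_2).
Local Notation i1 := (1%R : 'I_2).

Lemma prod_I2 (T : comPzRingType) (f : 'I_2 -> T) : \prod_i f i = f 0 * f 1.
Proof.
rewrite big_ord_recl big_ord_recl big_ord0 mulr1.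
by congr (_ * f _); apply/val_inj.
Qed.

Lemma peval_expand (Q : polyan R) z :
  peval Q z = \sum_(m <- msupp Q) Q@_m * (z ^+ m 0 * z^* ^+ m 1).
Proof.
rewrite /peval mevalE; apply: eq_bigr => m _; rewrite prod_I2 //.
Qed.

Lemma peval_main (a : C) d (Q : polyan R) z :
  peval (a *: X0 ^+ d + Q) z = a * z ^+ d + peval Q z.
Proof.
rewrite /peval mevalD mevalZ; congr (_ * _ + _).
by rewrite rmorphXn /= mevalXU.
Qed.


Lemma mdeg2 (m : 'X_{1..2}) : mdeg m = (m i0 + m i1)%N.
Proof.
rewrite mdegE big_ord_recl big_ord_recl big_ord0 addn0.
by congr (_ + m _)%N; apply/val_inj.
Qed.

Section Rep.
Variables (a : C) (d : nat) (Q : polyan R).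
Hypotheses (ha : a != 0) (hQ : (msize Q <= d)%N).

Definition Zs z := a * z ^+ d + peval Q z = 0.
Definition mon (r : nat) (z : C) := z ^+ (r %/ d) * z^* ^+ (r %% d).
Definition rep (f : C -> C) := exists c : 'rV[C]_(d * d),
  forall z, Zs z -> f z = \sum_(r < d * d) c 0 r * mon r z.

Lemma rep_ext f g : (forall z, Zs z -> f z = g z) -> rep g -> rep f.
Proof. by move=> e [c hc]; exists c => z hz; rewrite e // hc. Qed.

Lemma rep0 : rep (fun _ => 0).
Proof. by exists 0 => z _; rewrite big1 // => r _; rewrite mxE mul0r. Qed.

Lemma repD f g : rep f -> rep g -> rep (fun z => f z + g z).
Proof.
move=> [c hc] [e he]; exists (c + e) => z hz; rewrite hc // he // -big_split.
by apply: eq_bigr => r _; rewrite mxE mulrDl.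
Qed.

Lemma repZ k f : rep f -> rep (fun z => k * f z).
Proof.
move=> [c hc]; exists (k *: c) => z hz; rewrite hc // mulr_sumr.
by apply: eq_bigr => r _; rewrite mxE mulrA.
Qed.

Lemma rep_sum (T : eqType) (s : seq T) (g : T -> C -> C) :
  (forall x, x \in s -> rep (g x)) -> rep (fun z => \sum_(x <- s) g x z).
Proof.
elim: s => [|x s IH] H.
  by apply: rep_ext rep0 => z _; rewrite big_nil.
have h1 := H x (mem_head x s).
have h2 : rep (fun z => \sum_(y <- s) g y z).
  by apply: IH => y hy; apply: H; rewrite inE hy orbT.
eapply rep_ext; last exact: (repD h1 h2).
by move=> z _ /=; rewrite big_cons.
Qed.

Lemma Zs_z z : Zs z -> z ^+ d = - a^-1 * peval Q z.
Proof.
rewrite /Zs => /eqP; rewrite addr_eq0 => /eqP H.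
by rewrite -[z ^+ d](mulKf ha) H mulrN mulNr.
Qed.

Lemma Zs_zc z : Zs z -> z^* ^+ d =
  - (a^*)^-1 * \sum_(m <- msupp Q) (Q@_m)^* * (z^* ^+ m 0 * z ^+ m 1).
Proof.
move=> hz; have := congr1 Num.conj_op hz.
rewrite /= rmorph0 rmorphD rmorphM rmorphXn peval_expand rmorph_sum /=.
move/eqP; rewrite addr_eq0 => /eqP H.
have hac : a^* != 0 by rewrite conjC_eq0.
rewrite -[z^* ^+ d](mulKf hac) H mulrN mulNr; congr (- (_ * _)).
apply: eq_bigr => m _; by rewrite rmorphM rmorphM !rmorphXn /= conjCK.
Qed.

Lemma rep_mono k : forall i j, (i + j < k)%N -> rep (fun z => z ^+ i * z^* ^+ j).
Proof.
elim: k => [//|k IH] i j hij.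
case: (leqP d i) => hi.
  eapply rep_ext; last first.
    apply: (@rep_sum _ (msupp Q)
      (fun m z => (- a^-1 * Q@_m) * (z ^+ (i - d + m i0) * z^* ^+ (j + m i1)))).
    move=> m hm; apply: repZ; apply: IH.
    have := msize_mdeg_lt hm; rewrite mdeg2 => h; lia.
  move=> z hz /=.
  have -> : z ^+ i = z ^+ (i - d) * z ^+ d by rewrite -exprD subnK.
  rewrite (Zs_z hz) peval_expand !mulr_sumr mulr_suml; apply: eq_bigr => m _.
  rewrite !exprD; ring.
case: (leqP d j) => hj.
  eapply rep_ext; last first.
    apply: (@rep_sum _ (msupp Q)
      (fun m z => (- (a^*)^-1 * (Q@_m)^*) * (z ^+ (i + m i1) * z^* ^+ (j - d + m i0)))).
    move=> m hm; apply: repZ; apply: IH.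
    have := msize_mdeg_lt hm; rewrite mdeg2 => h; lia.
  move=> z hz /=.
  have -> : z^* ^+ j = z^* ^+ (j - d) * z^* ^+ d by rewrite -exprD subnK.
  rewrite (Zs_zc hz) !mulr_sumr; apply: eq_bigr => m _.
  rewrite !exprD; ring.
have hr : (i * d + j < d * d)%N by nia.
exists (\row_(r < d * d) ((r : nat) == (i * d + j)%N)%:R) => z _.
rewrite (bigD1 (Ordinal hr)) //= big1 => [|r hr'].
  rewrite mxE eqxx mul1r addr0 /mon divnMDl ?modnMDl ?divn_small ?modn_small ?addn0 //.
  lia.
rewrite mxE; case: eqP => [e|]; last by rewrite mul0r.
by case/eqP: hr'; apply/val_inj.
Qed.

Lemma interp (s : seq C) (t u : 'I_(size s)) : uniq s ->
  (\prod_(v < size s | v != t) (('X - (s`_v)%:P) * ((s`_t - s`_v)^-1)%:P)).[s`_u]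
  = (t == u)%:R.
Proof.
move=> us; rewrite horner_prod; case: (eqVneq t u) => [<-|ne].
  apply: big1 => v hv; rewrite hornerM hornerXsubC hornerC mulfV //.
  by rewrite subr_eq0 nth_uniq // eq_sym.
rewrite (bigD1 u) 1?eq_sym //= hornerM hornerXsubC subrr !mul0r //.
Qed.

Lemma count_bound (s : seq C) : uniq s -> (forall z, z \in s -> Zs z) ->
  (size s <= d * d)%N.
Proof.
move=> us hs.
pose g (t : 'I_(size s)) :=
  \prod_(v < size s | v != t) (('X - (s`_v)%:P) * ((s`_t - s`_v)^-1)%:P).
have hg : forall t, exists c : 'rV[C]_(d * d),
    forall z, Zs z -> (g t).[z] = \sum_(r < d * d) c 0 r * mon r z.
  move=> t.
  have : rep (fun z => \sum_(i < size (g t)) (g t)`_i * (z ^+ i * z^* ^+ 0)).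
    apply: rep_sum => i _; apply: repZ; apply: (@rep_mono i.+1); lia.
  case=> c hc; exists c => z hz; rewrite -hc // horner_coef.
  by apply: eq_bigr => i _; rewrite expr0 mulr1.
have [cf hcf] := fin_all_exists hg.
pose A := \matrix_(t < size s, r < d * d) cf t 0 r.
pose B := \matrix_(r < d * d, u < size s) mon r s`_u.
have AB : A *m B = 1%:M.
  apply/matrixP => t u; rewrite !mxE.
  have -> : \sum_j A t j * B j u = (g t).[s`_u].
    rewrite hcf; last by apply: hs; apply: mem_nth.
    by apply: eq_bigr => r _; rewrite !mxE.
  by rewrite interp.
have := mxrankM_maxl A B; rewrite AB mxrank1 => h.
exact: leq_trans h (rank_leq_col A).
Qed.

End Rep.

Lemma at_most (a : C) d (Q : polyan R) : a != 0 -> (msize Q <= d)%N ->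
  at_most_zeros (a *: X0 ^+ d + Q) (d ^ 2).
Proof.
move=> ha hQ s us hs; rewrite -mulnn; apply: (count_bound ha hQ us).
by move=> z /hs; rewrite /pzero peval_main.
Qed.

Definition TF (F : polyan R) d := exists a Q,
  [/\ a != 0, (msize Q <= d)%N & F = a *: X0 ^+ d + Q].

Definition mXd d : 'X_{1..2} := (U_(i0) *+ d)%MM.

Lemma mdeg_mXd d : mdeg (mXd d) = d.
Proof. by rewrite /mXd mdegMn mdeg1 mul1n. Qed.

Lemma X0n d : X0 ^+ d = 'X_[mXd d].
Proof. by rewrite mpolyXn. Qed.

Lemma eq_mXd d (m : 'X_{1..2}) : mdeg m = d -> m i1 = 0%N -> m = mXd d.
Proof.
rewrite mdeg2 => hd h1; apply/mnmP => i; rewrite /mXd mulmnE mnm1E.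
have [->|] := eqVneq i i0; first by rewrite /= mul1n -hd h1 addn0.
move=> ne; have -> : i = i1.
  by apply/val_inj; case: i ne => [[|[|]]] //= ? ne; case/eqP: ne; apply/val_inj.
by rewrite h1.
Qed.

Lemma TF_coef F d : TF F d -> (F@_(mXd d) != 0) /\ forall m, m \in msupp F -> mdeg m = d -> m i1 = 0%N.
Proof.
case=> [a [Q [ha hQ ->]]].
have cQ m : mdeg m = d -> Q@_m = 0.
  by move=> hm; apply: memN_msupp_eq0; apply: msize_mdeg_ge; rewrite hm.
split.
  by rewrite mcoeffD mcoeffZ X0n mcoeffX eqxx mulr1 cQ ?mdeg_mXd // addr0.
move=> m; rewrite mcoeff_msupp mcoeffD mcoeffZ X0n mcoeffX => hm hd.
move: hm; rewrite cQ // addr0; case: (eqVneq (mXd d) m) => [<- _|_]; last by rewrite mulr0 eqxx.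
by rewrite /mXd mulmnE mnm1E.
Qed.

Lemma TF_msize F d : TF F d -> msize F = d.+1.
Proof.
move=> hT; have [h0 _] := TF_coef hT.
case: hT => [a [Q [ha hQ eF]]]; apply/eqP; rewrite eqn_leq; apply/andP; split.
  rewrite eF; apply: leq_trans (msizeD_le _ _) _; rewrite geq_max; apply/andP; split.
    by apply: leq_trans (msizeZ_le _ _) _; rewrite X0n msizeX mdeg_mXd.
  by apply: leq_trans hQ _.
by rewrite -(mdeg_mXd d); apply: msize_mdeg_lt; rewrite mcoeff_msupp.
Qed.

Lemma top_TF F d : msize F = d.+1 ->
  (forall m, m \in msupp F -> mdeg m = d -> m i1 = 0%N) -> TF F d.
Proof.
move=> hs htop.
have nz : F != 0 by rewrite -msize_poly_eq0 hs.
have hl : mlead F = mXd d.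
  apply: eq_mXd; first by have := mlead_deg nz; rewrite hs => -[].
  by apply: htop; [apply: mlead_supp | have := mlead_deg nz; rewrite hs => -[]].
exists (F@_(mXd d)), (F - F@_(mXd d) *: X0 ^+ d); split.
- by rewrite -hl mleadc_eq0.
- rewrite msizeE; apply/bigmax_leqP_seq => m hm _.
  move: hm; rewrite mcoeff_msupp mcoeffB mcoeffZ X0n mcoeffX.
  case: (ltngtP (mdeg m) d) => // hd.
    rewrite memN_msupp_eq0 ?sub0r; last by apply: msize_mdeg_ge; rewrite hs.
    case: (eqVneq (mXd d) m) => [e|_]; last by rewrite mulr0 oppr0 eqxx.
    by move: hd; rewrite -e mdeg_mXd ltnn.
  case: (eqVneq (mXd d) m) => [<-|ne]; first by rewrite mulr1 subrr eqxx.
  rewrite mulr0 subr0 -mcoeff_msupp => hm.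
  by rewrite -(eq_mXd hd (htop m hm hd)) eqxx in ne.
- by rewrite addrC subrK.
Qed.

Definition sw : 'S_2 := tperm i0 i1.
Definition swm (m : 'X_{1..2}) : 'X_{1..2} := [multinom m (sw i) | i < 2].

Lemma swm0 m : swm m i0 = m i1.
Proof. by rewrite mnmE /sw tpermL. Qed.
Lemma swm1 m : swm m i1 = m i0.
Proof. by rewrite mnmE /sw tpermR. Qed.
Lemma swmK m : swm (swm m) = m.
Proof. by apply/mnmP => i; rewrite !mnmE /sw tpermK. Qed.
Lemma mdeg_swm m : mdeg (swm m) = mdeg m.
Proof. by rewrite !mdeg2 swm0 swm1 addnC. Qed.
Lemma coef_sym (G : polyan R) m : (msym sw G)@_m = G@_(swm m).
Proof. exact: mcoeff_sym. Qed.
Lemma msymK (G : polyan R) : msym sw (msym sw G) = G.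
Proof. by apply/mpolyP => m; rewrite !coef_sym swmK. Qed.
Lemma msize_sym_le (G : polyan R) : (msize (msym sw G) <= msize G)%N.
Proof.
rewrite [X in (X <= _)%N]msizeE; apply/bigmax_leqP_seq => m hm _.
rewrite -(mdeg_swm m); apply: msize_mdeg_lt.
by rewrite mcoeff_msupp -coef_sym -mcoeff_msupp.
Qed.
Lemma msize_sym (G : polyan R) : msize (msym sw G) = msize G.
Proof.
apply/eqP; rewrite eqn_leq msize_sym_le /=.
by rewrite -{1}(msymK G) msize_sym_le.
Qed.
Lemma msym_nz (G : polyan R) : G != 0 -> msym sw G != 0.
Proof. by apply: contraNneq => e; rewrite -(msymK G) e msym0. Qed.

Lemma factor_TF (F P1 P2 : polyan R) n :
  TF F n -> F = P1 * P2 -> TF P1 (msize P1).-1.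
Proof.
move=> hT eF.
have [_ htop] := TF_coef hT; have hsF := TF_msize hT.
have nzF : F != 0 by rewrite -msize_poly_eq0 hsF.
have nz1 : P1 != 0 by apply: contraNneq nzF => e; rewrite eF e mul0r.
have nz2 : P2 != 0 by apply: contraNneq nzF => e; rewrite eF e mulr0.
have nzF' := msym_nz nzF; have nz1' := msym_nz nz1; have nz2' := msym_nz nz2.
have eF' : msym sw F = msym sw P1 * msym sw P2 by rewrite eF msymM.
have hl := mleadM nz1' nz2'; rewrite -eF' in hl.
have hF0 : mlead (msym sw F) i0 = 0%N.
  rewrite -swm1; apply: htop.
    by rewrite mcoeff_msupp -coef_sym -mcoeff_msupp; apply: mlead_supp.
  by rewrite mdeg_swm; have := mlead_deg nzF'; rewrite msize_sym hsF => -[].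
have h10 : mlead (msym sw P1) i0 = 0%N.
  by move: hF0; rewrite hl mnmDE => /eqP; rewrite addn_eq0 => /andP [/eqP].
apply: top_TF; first by rewrite prednK // lt0n msize_poly_eq0.
move=> m hm hd.
have hm' : swm m \in msupp (msym sw P1).
  by rewrite mcoeff_msupp coef_sym swmK -mcoeff_msupp.
have hle := msupp_le_mlead hm'.
have hdl : mdeg (mlead (msym sw P1)) = (msize P1).-1.
  by have := mlead_deg nz1'; rewrite msize_sym => <-.
rewrite -swm0; apply/eqP; rewrite -leqn0 leqNgt; apply/negP => hpos.
have hlt : (mlead (msym sw P1) < swm m)%O.
  apply/ltmcP; first by rewrite hdl mdeg_swm hd.
  by exists i0 => [j|]; [case: j => [[|]] | rewrite h10].
by have := lt_le_trans hlt hle; rewrite ltxx.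
Qed.

Lemma pevalM (P1 P2 : polyan R) z : peval (P1 * P2) z = peval P1 z * peval P2 z.
Proof. by rewrite /peval mevalM. Qed.

Lemma TF_at_most F d : TF F d -> at_most_zeros F (d ^ 2).
Proof. by case=> a [Q [ha hQ ->]]; apply: at_most. Qed.

Lemma mainL n (a : C) (Q P : polyan R) : a != 0 -> (msize Q <= n)%N ->
  P = a *: X0 ^+ n + Q ->
  at_most_zeros P (n ^ 2) /\ (exactly_zeros P (n ^ 2) -> pirreducible P).
Proof.
move=> ha hQ eP.
have hT : TF P n by exists a, Q.
split; first exact: TF_at_most.
move=> [s [us sz hs]] [P1 [P2 [h1 h2 e12]]].
have hT1 := factor_TF hT e12.
have hT2 : TF P2 (msize P2).-1 by apply: (factor_TF hT); rewrite e12 mulrC.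
have hsP := TF_msize hT.
have nzP : P != 0 by rewrite -msize_poly_eq0 hsP.
have nz1 : P1 != 0 by apply: contraNneq nzP => e; rewrite e12 e mul0r.
have nz2 : P2 != 0 by apply: contraNneq nzP => e; rewrite e12 e mulr0.
have hM := msizeM nz1 nz2; rewrite -e12 hsP in hM.
move: h1 h2; rewrite /pdeg => h1 h2.
pose p := fun z => peval P1 z == 0.
have b1 := TF_at_most hT1 (filter_uniq p us).
have b2 := TF_at_most hT2 (filter_uniq (predC p) us).
have c1 : (size (filter p s) <= ((msize P1).-1) ^ 2)%N.
  by apply: b1 => z; rewrite mem_filter => /andP [/eqP].
have c2 : (size (filter (predC p) s) <= ((msize P2).-1) ^ 2)%N.
  apply: b2 => z; rewrite mem_filter => /andP [hz zs].
  have /hs := zs; rewrite /pzero e12 pevalM => /eqP; rewrite mulf_eq0.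
  by case/orP => /eqP // e; move: hz; rewrite /= /p e eqxx.
have : size s = (size (filter p s) + size (filter (predC p) s))%N.
  by rewrite !size_filter count_predC.
move: c1 c2 hM h1 h2; rewrite sz.
case: (msize P1) => [//|d1]; case: (msize P2) => [//|d2] /=.
move=> c1 c2 hM h1 h2 e; nia.
Qed.

End Main.

Theorem corollary2p14 (R : realType) :
  (* (i) *)
  (forall (n : nat) (a : R[i]) (P Pn1 : polyan R),
     a != 0 ->
     (msize Pn1 <= n)%N -> (* i.e. Pn1 = 0 or deg Pn1 <= n-1 *)
     P = a *: 'X_(0 : 'I_2) ^+ n + Pn1 ->
     at_most_zeros P (n ^ 2) /\ (exactly_zeros P (n ^ 2) -> pirreducible P)) /\
  (* (ii) *)
  (forall (n : nat) (p q : {poly R[i]}) (P : polyan R),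
     (size p).-1 = n ->
     (size q < size p)%N ->
     P = an_of p + conjan_of q ->
     at_most_zeros P (n ^ 2) /\ (exactly_zeros P (n ^ 2) -> pirreducible P)).
Proof.
split; first by move=> n a P Q; apply: mainL.
move=> n p q P hp hq eP.
have sp : size p = n.+1 by rewrite -hp prednK //; apply: leq_ltn_trans hq.
have hlc : p`_n != 0.
  have : lead_coef p != 0 by rewrite lead_coef_eq0 -size_poly_gt0 sp.
  by rewrite lead_coefE sp.
apply: (mainL (Q := \sum_(j < n) p`_j *: 'X_(0 : 'I_2) ^+ j + conjan_of q) hlc).
  apply: leq_trans (msizeD_le _ _) _; rewrite geq_max; apply/andP; split.
    apply: leq_trans (msize_sum _ _ _) _; apply/bigmax_leqP => j _.
    apply: leq_trans (msizeZ_le _ _) _.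
    by rewrite mpolyXn msizeX mdegMn mdeg1 mul1n.
  apply: leq_trans (msize_sum _ _ _) _; apply/bigmax_leqP => j _.
  apply: leq_trans (msizeZ_le _ _) _.
  rewrite mpolyXn msizeX mdegMn mdeg1 mul1n.
  by have := ltn_ord j; move: hq; rewrite sp; lia.
rewrite eP /an_of.
have -> : \sum_(j < size p) p`_j *: 'X_(0 : 'I_2) ^+ j =
    \sum_(j < n.+1) p`_j *: ('X_(0 : 'I_2) : polyan R) ^+ j.
  by rewrite -(big_mkord xpredT (fun j => p`_j *: ('X_(0 : 'I_2) : polyan R) ^+ j)) sp big_mkord.
by rewrite big_ord_recr /= addrC addrA [_ *: _ + _]addrC.
Qed.
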